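(* Let $X$ be a sequentially complete Hausdorff locally convex vector space and let $x(\cdot):[a,b]\to X$ have weakly compact semivariation on $[a,b]$. Then for every continuous $g:[a,b]\to\mathbb{C}$ the integral $\int_a^b g(t)\,dx(t)$ exists in $X$.
   Context: For $a\le b$ let $E(a,b)=\{\sum_{i=1}^n[x(t_{2i})-x(t_{2i-1})] : n\ge1,\ a\le t_1<t_2<\dots<t_{2n}\le b\}$. The function $x(\cdot)$ has weakly compact semivariation on $[a,b]$ if $E(a,b)$ is relatively weakly compact in $X$ (weak topology $\sigma(X,X')$, $X'$ the topological dual). The integral $\int_a^b g\,dx$ is the limit in the topology of $X$, as the mesh $d=\max_i|t_i-t_{i-1}|\to0$, of the Riemann–Stieltjes sums $\sum_{i=1}^n g(s_i)[x(t_i)-x(t_{i-1})]$ over tagged divisions $a=t_0\le\dots\le t_n=b$, $s_i\in[t_{i-1},t_i]$. *)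

(* Defs.v *)
From Stdlib Require Import Reals List.
Open Scope R_scope.

Record Cplx := mkC { Re : R ; Im : R }.
Definition C0 : Cplx := mkC 0 0.
Definition C1 : Cplx := mkC 1 0.
Definition Cadd (z w : Cplx) : Cplx := mkC (Re z + Re w) (Im z + Im w).
Definition Copp (z : Cplx) : Cplx := mkC (- Re z) (- Im z).
Definition Cmul (z w : Cplx) : Cplx :=
  mkC (Re z * Re w - Im z * Im w) (Re z * Im w + Im z * Re w).
Definition Cnorm (z : Cplx) : R := sqrt (Re z * Re z + Im z * Im z).

(** * Hausdorff locally convex spaces over C, given by a separating family
    of seminorms (p i)_{i : Idx} which generates the topology. *)
Record LCS := {
  carrier :> Type ;
  vzero : carrier ;
  vadd : carrier -> carrier -> carrier ;
  vopp : carrier -> carrier ;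
  vscal : Cplx -> carrier -> carrier ;
  vadd_assoc : forall x y z, vadd x (vadd y z) = vadd (vadd x y) z ;
  vadd_comm : forall x y, vadd x y = vadd y x ;
  vadd_0 : forall x, vadd x vzero = x ;
  vadd_opp : forall x, vadd x (vopp x) = vzero ;
  vscal_1 : forall x, vscal C1 x = x ;
  vscal_assoc : forall a b x, vscal a (vscal b x) = vscal (Cmul a b) x ;
  vscal_distr_v : forall a x y, vscal a (vadd x y) = vadd (vscal a x) (vscal a y) ;
  vscal_distr_c : forall a b x, vscal (Cadd a b) x = vadd (vscal a x) (vscal b x) ;
  Idx : Type ;
  sn : Idx -> carrier -> R ;
  sn_triangle : forall i x y, sn i (vadd x y) <= sn i x + sn i y ;
  sn_homog : forall i a x, sn i (vscal a x) = Cnorm a * sn i x ;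
  sn_separating : forall x, (forall i, sn i x = 0) -> x = vzero
}.

Arguments vzero {_}.
Arguments vadd {_} _ _.
Arguments vopp {_} _.
Arguments vscal {_} _ _.
Arguments sn {_} _ _.

Section Defs.
Variable X : LCS.

Definition vsub (x y : X) : X := vadd x (vopp y).

Fixpoint vsum (f : nat -> X) (n : nat) : X :=
  match n with O => vzero | S m => vadd (vsum f m) (f m) end.

Definition seq_converges (u : nat -> X) (l : X) : Prop :=
  forall (i : Idx X) (eps : R), eps > 0 ->
    exists N, forall n, (n >= N)%nat -> sn i (vsub (u n) l) < eps.

Definition cauchy_seq (u : nat -> X) : Prop :=
  forall (i : Idx X) (eps : R), eps > 0 ->
    exists N, forall m n, (m >= N)%nat -> (n >= N)%nat -> sn i (vsub (u m) (u n)) < eps.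

Definition sequentially_complete : Prop :=
  forall u, cauchy_seq u -> exists l, seq_converges u l.

(** Topological dual X': linear functionals continuous for the topology
    generated by the seminorms (basic neighbourhoods of x:
    {y | forall i in L, p_i (y - x) < delta}, L finite). *)
Definition is_linear_functional (f : X -> Cplx) : Prop :=
  (forall x y, f (vadd x y) = Cadd (f x) (f y)) /\
  (forall a x, f (vscal a x) = Cmul a (f x)).

Definition continuous_functional (f : X -> Cplx) : Prop :=
  forall (x : X) (eps : R), eps > 0 ->
    exists (L : list (Idx X)) (delta : R), delta > 0 /\
      forall y, (forall i, In i L -> sn i (vsub y x) < delta) ->
        Cnorm (Cadd (f y) (Copp (f x))) < eps.

Definition in_dual (f : X -> Cplx) : Prop :=
  is_linear_functional f /\ continuous_functional f.

Definition weakly_open (U : X -> Prop) : Prop :=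
  forall x, U x ->
    exists (fs : list (X -> Cplx)) (delta : R),
      (forall f, In f fs -> in_dual f) /\ delta > 0 /\
      forall y, (forall f, In f fs -> Cnorm (Cadd (f y) (Copp (f x))) < delta) -> U y.

Definition weak_closure (E : X -> Prop) (x : X) : Prop :=
  forall U, weakly_open U -> U x -> exists y, U y /\ E y.

Definition weakly_compact (K : X -> Prop) : Prop :=
  forall (J : Type) (U : J -> X -> Prop),
    (forall j, weakly_open (U j)) ->
    (forall x, K x -> exists j, U j x) ->
    exists (l : list J), forall x, K x -> exists j, In j l /\ U j x.

Definition relatively_weakly_compact (E : X -> Prop) : Prop :=
  weakly_compact (weak_closure E).

Definition Eab (x : R -> X) (a b : R) (e : X) : Prop :=
  exists (n : nat) (t : nat -> R),
    (n >= 1)%nat /\ a <= t 1%nat /\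
    (forall k, (1 <= k < 2 * n)%nat -> t k < t (S k)) /\
    t (2 * n)%nat <= b /\
    e = vsum (fun k => vsub (x (t (2 * k + 2)%nat)) (x (t (2 * k + 1)%nat))) n.

Definition weakly_compact_semivariation (x : R -> X) (a b : R) : Prop :=
  relatively_weakly_compact (Eab x a b).

Definition tagged_division (a b : R) (n : nat) (t s : nat -> R) : Prop :=
  t O = a /\ t n = b /\
  (forall k, (1 <= k <= n)%nat -> t (pred k) <= t k) /\
  (forall k, (1 <= k <= n)%nat -> t (pred k) <= s k <= t k).

Definition mesh_lt (n : nat) (t : nat -> R) (delta : R) : Prop :=
  forall k, (1 <= k <= n)%nat -> t k - t (pred k) < delta.

Definition RS_sum (g : R -> Cplx) (x : R -> X) (n : nat) (t s : nat -> R) : X :=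
  vsum (fun k => vscal (g (s (S k))) (vsub (x (t (S k))) (x (t k)))) n.

Definition RS_integral_is (g : R -> Cplx) (x : R -> X) (a b : R) (I : X) : Prop :=
  forall (i : Idx X) (eps : R), eps > 0 ->
    exists delta, delta > 0 /\
      forall n t s, tagged_division a b n t s -> mesh_lt n t delta ->
        sn i (vsub (RS_sum g x n t s) I) < eps.

Definition RS_integrable (g : R -> Cplx) (x : R -> X) (a b : R) : Prop :=
  exists I, RS_integral_is g x a b I.

End Defs.

Definition continuous_on_C (g : R -> Cplx) (a b : R) : Prop :=
  forall t, a <= t <= b -> forall eps, eps > 0 ->
    exists delta, delta > 0 /\
      forall u, a <= u <= b -> Rabs (u - t) < delta ->
        Cnorm (Cadd (g u) (Copp (g t))) < eps.

(* Main.v *)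
From Stdlib Require Import Reals Lra Lia List ClassicalEpsilon Classical.
From Coquelicot Require Import Hierarchy Series.
From mathcomp Require classical_sets boolp.
From Corelib Require ssrbool.
Require Import Defs.
Open Scope R_scope.

Lemma Rabs_inv x a : Rabs x <= a -> - a <= x <= a.
Proof. intros H. pose proof (Rle_abs x). pose proof (Rle_abs (-x)). rewrite Rabs_Ropp in H1. lra. Qed.

Lemma Cnorm_real r : Cnorm (mkC r 0) = Rabs r.
Proof. unfold Cnorm; simpl. replace (r*r+0*0) with (Rsqr r) by (unfold Rsqr; ring). apply sqrt_Rsqr_abs. Qed.

Lemma Cnorm_nonneg z : 0 <= Cnorm z.
Proof. unfold Cnorm; apply sqrt_pos. Qed.

Lemma Re_le_Cnorm z : Rabs (Re z) <= Cnorm z.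
Proof.
  unfold Cnorm. rewrite <- sqrt_Rsqr_abs. apply sqrt_le_1_alt. unfold Rsqr.
  pose proof (Rle_0_sqr (Im z)). unfold Rsqr in H. lra.
Qed.

Lemma Im_le_Cnorm z : Rabs (Im z) <= Cnorm z.
Proof.
  unfold Cnorm. rewrite <- sqrt_Rsqr_abs. apply sqrt_le_1_alt. unfold Rsqr.
  pose proof (Rle_0_sqr (Re z)). unfold Rsqr in H. lra.
Qed.

Lemma Cnorm_le_sum z : Cnorm z <= Rabs (Re z) + Rabs (Im z).
Proof.
  unfold Cnorm. destruct z as [p q]; simpl.
  rewrite <- (sqrt_Rsqr (Rabs p + Rabs q)).
  2: { pose proof (Rabs_pos p); pose proof (Rabs_pos q); lra. }
  apply sqrt_le_1_alt. unfold Rsqr.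
  pose proof (Rabs_pos p); pose proof (Rabs_pos q).
  assert (p*p = Rabs p * Rabs p) by (rewrite <- Rabs_mult; rewrite Rabs_right; [ring| apply Rle_ge, Rle_0_sqr]).
  assert (q*q = Rabs q * Rabs q) by (rewrite <- Rabs_mult; rewrite Rabs_right; [ring| apply Rle_ge, Rle_0_sqr]).
  nra.
Qed.

Lemma Cnorm_triangle z w : Cnorm (Cadd z w) <= Cnorm z + Cnorm w.
Proof.
  destruct z as [p q]; destruct w as [r s]; unfold Cnorm, Cadd; simpl.
  set (A := p*p+q*q). set (B := r*r+s*s).
  assert (HA : 0 <= A) by (unfold A; nra). assert (HB: 0 <= B) by (unfold B; nra).
  rewrite <- (sqrt_Rsqr (sqrt A + sqrt B)).
  2: { pose proof (sqrt_pos A); pose proof (sqrt_pos B); lra. }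
  apply sqrt_le_1_alt. unfold Rsqr.
  replace ((sqrt A + sqrt B) * (sqrt A + sqrt B)) with (sqrt A * sqrt A + sqrt B * sqrt B + 2 * (sqrt A * sqrt B)) by ring.
  rewrite !sqrt_sqrt by auto. rewrite <- sqrt_mult by auto.
  assert (p*r+q*s <= sqrt (A*B)).
  { destruct (Rle_or_lt (p*r+q*s) 0). pose proof (sqrt_pos (A*B)); lra.
    rewrite <- (sqrt_Rsqr (p*r+q*s)) by lra. apply sqrt_le_1_alt. unfold Rsqr, A, B.
    assert (E: (p*p+q*q)*(r*r+s*s) - (p*r+q*s)*(p*r+q*s) = (p*s-q*r)*(p*s-q*r)) by ring.
    pose proof (Rle_0_sqr (p*s-q*r)). unfold Rsqr in *. lra. }
  set (S := sqrt (A*B)) in *. unfold A, B. nra.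
Qed.

Lemma Cnorm_opp z : Cnorm (Copp z) = Cnorm z.
Proof. unfold Cnorm, Copp; simpl. f_equal; ring. Qed.

Lemma Cnorm_mul z w : Cnorm (Cmul z w) = Cnorm z * Cnorm w.
Proof.
  unfold Cnorm, Cmul; simpl. rewrite <- sqrt_mult by nra. f_equal; ring.
Qed.

Arguments vadd_assoc {_} _ _ _.
Arguments vadd_comm {_} _ _.
Arguments vadd_0 {_} _.
Arguments vadd_opp {_} _.
Arguments vscal_1 {_} _.
Arguments vscal_assoc {_} _ _ _.
Arguments vscal_distr_v {_} _ _ _.
Arguments vscal_distr_c {_} _ _ _.
Arguments sn_triangle {_} _ _ _.
Arguments sn_homog {_} _ _ _.
Arguments sn_separating {_} _ _.
Arguments vsub {_} _ _.
Arguments vsum {_} _ _.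

Section Vec.
Context {X : LCS}.
Implicit Types x y z u v w : X.
Implicit Types f g : nat -> X.

Lemma vadd_0l x : vadd vzero x = x.
Proof. rewrite vadd_comm; apply vadd_0. Qed.

Lemma vadd_oppl x : vadd (vopp x) x = vzero.
Proof. rewrite vadd_comm; apply vadd_opp. Qed.

Lemma vadd_cancel_l (a : X) x y : vadd a x = vadd a y -> x = y.
Proof.
  intros H. rewrite <- (vadd_0l x), <- (vadd_0l y), <- (vadd_oppl a).
  rewrite <- !vadd_assoc, H. reflexivity.
Qed.

Lemma vopp_unique x y : vadd x y = vzero -> y = vopp x.
Proof. intros H. apply (vadd_cancel_l x). rewrite H, vadd_opp. reflexivity. Qed.

Lemma vopp_opp x : vopp (vopp x) = x.
Proof. symmetry. apply vopp_unique. apply vadd_oppl. Qed.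

Lemma vopp_add x y : vopp (vadd x y) = vadd (vopp x) (vopp y).
Proof.
  symmetry. apply vopp_unique.
  rewrite (vadd_comm (vopp x)), vadd_assoc, <- (vadd_assoc x y), vadd_opp, vadd_0, vadd_opp.
  reflexivity.
Qed.

Lemma vopp_zero : vopp (@vzero X) = vzero.
Proof. symmetry; apply vopp_unique; apply vadd_0. Qed.

Lemma vadd_swap4 (a b c d : X) : vadd (vadd a b) (vadd c d) = vadd (vadd a c) (vadd b d).
Proof.
  rewrite !vadd_assoc. f_equal. rewrite <- !vadd_assoc. f_equal. apply vadd_comm.
Qed.

Lemma vscal_C0 x : vscal Defs.C0 x = vzero.
Proof.
  assert (H : vscal (Cadd Defs.C0 Defs.C0) x = vadd (vscal Defs.C0 x) (vscal Defs.C0 x)) by apply vscal_distr_c.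
  replace (Cadd Defs.C0 Defs.C0) with Defs.C0 in H by (unfold Cadd, Defs.C0; simpl; f_equal; ring).
  apply (vadd_cancel_l (vscal Defs.C0 x)). rewrite <- H, vadd_0. reflexivity.
Qed.

Lemma vscal_zero a : vscal a (@vzero X) = @vzero X.
Proof.
  assert (H : vscal a (vadd (@vzero X) vzero) = vadd (vscal a vzero) (vscal a vzero)) by apply vscal_distr_v.
  rewrite vadd_0 in H.
  apply (vadd_cancel_l (vscal a (@vzero X))). rewrite <- H, vadd_0. reflexivity.
Qed.

Lemma vopp_scal x : vopp x = vscal (mkC (-1) 0) x.
Proof.
  symmetry; apply vopp_unique.
  rewrite <- (vscal_1 x) at 1. rewrite <- vscal_distr_c.
  replace (Cadd Defs.C1 (mkC (-1) 0)) with Defs.C0 by (unfold Cadd, Defs.C0, Defs.C1; simpl; f_equal; ring).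
  apply vscal_C0.
Qed.

Lemma vscal_opp a x : vscal a (vopp x) = vopp (vscal a x).
Proof.
  apply vopp_unique. rewrite <- vscal_distr_v, vadd_opp. apply vscal_zero.
Qed.

Lemma vsub_diag x : vsub x x = vzero.
Proof. apply vadd_opp. Qed.

Lemma vsub_add_add (a b c d : X) : vsub (vadd a b) (vadd c d) = vadd (vsub a c) (vsub b d).
Proof. unfold vsub. rewrite vopp_add. apply vadd_swap4. Qed.

Lemma vsub_chain x y z : vadd (vsub x y) (vsub y z) = vsub x z.
Proof.
  unfold vsub. rewrite <- vadd_assoc, (vadd_assoc (vopp y)), vadd_oppl, vadd_0l. reflexivity.
Qed.

Lemma vscal_sub a x y : vscal a (vsub x y) = vsub (vscal a x) (vscal a y).
Proof. unfold vsub. rewrite vscal_distr_v, vscal_opp. reflexivity. Qed.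

Lemma vsub_0 x : vsub x vzero = x.
Proof. unfold vsub. rewrite vopp_zero, vadd_0. reflexivity. Qed.

Lemma vsub_opp x y : vopp (vsub x y) = vsub y x.
Proof. unfold vsub. rewrite vopp_add, vopp_opp, vadd_comm. reflexivity. Qed.

Lemma vsum_ext f g n : (forall k, (k < n)%nat -> f k = g k) -> vsum f n = vsum g n.
Proof.
  induction n; intros H; simpl; auto. rewrite IHn by (intros; apply H; lia). rewrite H by lia; auto.
Qed.

Lemma vsum_add f g n : vsum (fun k => vadd (f k) (g k)) n = vadd (vsum f n) (vsum g n).
Proof.
  induction n; simpl. rewrite vadd_0; auto. rewrite IHn. apply vadd_swap4.
Qed.

Lemma vsum_scal a f n : vsum (fun k => vscal a (f k)) n = vscal a (vsum f n).
Proof.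
  induction n; simpl. rewrite vscal_zero; auto. rewrite IHn, vscal_distr_v; auto.
Qed.

Lemma vsum_opp f n : vsum (fun k => vopp (f k)) n = vopp (vsum f n).
Proof.
  induction n; simpl. rewrite vopp_zero; auto. rewrite IHn, vopp_add; auto.
Qed.

Lemma vsum_sub f g n : vsum (fun k => vsub (f k) (g k)) n = vsub (vsum f n) (vsum g n).
Proof. unfold vsub. rewrite vsum_add, vsum_opp. auto. Qed.

Lemma vsum_zero n : vsum (fun _ => @vzero X) n = vzero.
Proof. induction n; simpl; auto. rewrite IHn, vadd_0; auto. Qed.

Lemma vsum_shift f n : vsum f (S n) = vadd (f O) (vsum (fun k => f (S k)) n).
Proof.
  induction n. simpl. rewrite vadd_0l, vadd_0; auto.
  change (vsum f (S (S n))) with (vadd (vsum f (S n)) (f (S n))).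
  rewrite IHn. simpl. rewrite vadd_assoc; auto.
Qed.

Lemma sn_scal_real i r x : sn i (vscal (mkC r 0) x) = Rabs r * sn i x.
Proof. rewrite sn_homog, Cnorm_real; auto. Qed.

Lemma sn_zero i : sn i (@vzero X) = 0.
Proof. rewrite <- (vscal_C0 vzero), sn_homog. unfold Defs.C0. rewrite Cnorm_real, Rabs_R0. ring. Qed.

Lemma sn_opp i x : sn i (vopp x) = sn i x.
Proof. rewrite vopp_scal, sn_scal_real. replace (Rabs (-1)) with 1. ring. rewrite Rabs_left by lra. ring. Qed.

Lemma sn_nonneg i x : 0 <= sn i x.
Proof.
  pose proof (sn_triangle i x (vopp x)). rewrite vadd_opp, sn_zero, sn_opp in H. lra.
Qed.

Lemma sn_sub_sym i x y : sn i (vsub x y) = sn i (vsub y x).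
Proof. rewrite <- vsub_opp, sn_opp. auto. Qed.

Lemma sn_sub_tri i x y z : sn i (vsub x z) <= sn i (vsub x y) + sn i (vsub y z).
Proof. rewrite <- (vsub_chain x y z). apply sn_triangle. Qed.

Lemma sn_sub_le i x y : sn i (vsub x y) <= sn i x + sn i y.
Proof. unfold vsub. rewrite <- (sn_opp i y). apply sn_triangle. Qed.

End Vec.


Lemma zorn_prop (T : Type) (t0 : T) (Rl : T -> T -> Prop) :
  (forall t, Rl t t) -> (forall r s t, Rl r s -> Rl s t -> Rl r t) ->
  (forall A : T -> Prop, (forall s t, A s -> A t -> Rl s t \/ Rl t s) ->
     exists t, forall s, A s -> Rl s t) ->
  exists t, forall s, Rl t s -> Rl s t.
Proof.
  intros Hr Ht Hc.
  destruct (@classical_sets.ZL_preorder T t0 (fun s t => boolp.asbool (Rl s t))) as [m Hm].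
  - intros t. apply (ssrbool.introT (boolp.asboolP _)). apply Hr.
  - intros r s t H1 H2. apply (ssrbool.introT (boolp.asboolP _)). apply (Ht r s t).
    exact (ssrbool.elimT (boolp.asboolP _) H1). exact (ssrbool.elimT (boolp.asboolP _) H2).
  - intros A HA. destruct (Hc A) as [t Hta].
    + intros s t Hs Htt. destruct (HA s t Hs Htt) as [H|H].
      left. exact (ssrbool.elimT (boolp.asboolP _) H). right. exact (ssrbool.elimT (boolp.asboolP _) H).
    + exists t. intros s Hs. apply (ssrbool.introT (boolp.asboolP _)). auto.
  - exists m. intros s Hs. pose proof (Hm s). 
    apply (ssrbool.elimT (boolp.asboolP _)). apply H. apply (ssrbool.introT (boolp.asboolP _)). exact Hs.
Qed.

Section HB.
Variable X : LCS.
Variable i : Idx X.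
Implicit Types x y z d e : X.
Local Notation p := (sn i).
Definition rs (r : R) (y : X) : X := vscal (mkC r 0) y.

Lemma rs_add_r r s y : rs (r + s) y = vadd (rs r y) (rs s y).
Proof. unfold rs. rewrite <- vscal_distr_c. f_equal. unfold Cadd; simpl; f_equal; ring. Qed.
Lemma rs_add_v r y z : rs r (vadd y z) = vadd (rs r y) (rs r z).
Proof. apply vscal_distr_v. Qed.
Lemma rs_rs r s y : rs r (rs s y) = rs (r * s) y.
Proof. unfold rs. rewrite vscal_assoc. f_equal. unfold Cmul; simpl; f_equal; ring. Qed.
Lemma rs_1 y : rs 1 y = y.
Proof. apply vscal_1. Qed.
Lemma rs_0 y : rs 0 y = vzero.
Proof. apply vscal_C0. Qed.
Lemma rs_opp y : rs (-1) y = vopp y.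
Proof. unfold rs. rewrite vopp_scal. auto. Qed.
Lemma p_rs r y : p (rs r y) = Rabs r * p y.
Proof. apply sn_scal_real. Qed.
Lemma vsub_eq0 (a b : X) : vsub a b = vzero -> a = b.
Proof.
  intros H. rewrite <- (vadd_0 a), <- (vadd_oppl b), vadd_assoc. fold (vsub a b). rewrite H, vadd_0l. auto.
Qed.

Variable e : X.
Hypothesis pe_pos : p e > 0.

Record PF (G : X -> R -> Prop) : Prop := {
  pf_fun : forall y r1 r2, G y r1 -> G y r2 -> r1 = r2;
  pf_add : forall y1 y2 r1 r2, G y1 r1 -> G y2 r2 -> G (vadd y1 y2) (r1 + r2);
  pf_scal : forall y r k, G y r -> G (rs k y) (k * r);
  pf_dom : forall y r, G y r -> r <= p y;
  pf_base : G e (p e)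
}.

Definition G0 (y : X) (r : R) : Prop := exists k, y = rs k e /\ r = k * p e.

Lemma PF_G0 : PF G0.
Proof.
  constructor.
  - intros y r1 r2 [k1 [-> ->]] [k2 [H ->]].
    assert (k1 = k2).
    { assert (Hs : rs (k1 - k2) e = vzero).
      { replace (k1 - k2) with (k1 + (-1) * k2) by ring. rewrite rs_add_r, <- rs_rs, H, rs_rs.
        rewrite <- rs_add_r. replace (k2 + -1*k2) with 0 by ring. apply rs_0. }
      assert (Hp : p (rs (k1 - k2) e) = 0) by (rewrite Hs; apply sn_zero).
      rewrite p_rs in Hp. destruct (Req_dec (k1 - k2) 0). lra.
      apply Rmult_integral in Hp. destruct Hp as [Hp|Hp]. pose proof (Rabs_pos_lt (k1-k2) H0). lra. lra. }
    subst; auto.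
  - intros y1 y2 r1 r2 [k1 [-> ->]] [k2 [-> ->]]. exists (k1 + k2). split. rewrite rs_add_r; auto. ring.
  - intros y r k [k1 [-> ->]]. exists (k * k1). split. apply rs_rs. ring.
  - intros y r [k1 [-> ->]]. rewrite p_rs. pose proof (Rle_abs k1). pose proof (sn_nonneg i e). nra.
  - exists 1. split. rewrite rs_1; auto. ring.
Qed.

Definition PFT := { G : X -> R -> Prop | PF G }.
Definition PFle (s t : PFT) : Prop := forall y r, proj1_sig s y r -> proj1_sig t y r.

Lemma chain_ub (A : PFT -> Prop) :
  (forall s t, A s -> A t -> PFle s t \/ PFle t s) -> exists t, forall s, A s -> PFle s t.
Proof.
  intros HA.
  destruct (classic (exists s0, A s0)) as [[s0 Hs0]|Hne].
  2: { exists (exist _ G0 PF_G0). intros s Hs. exfalso; apply Hne; eauto. }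
  set (U := fun y r => exists s, A s /\ proj1_sig s y r).
  assert (HU : PF U).
  { constructor.
    - intros y r1 r2 [s [Hs H1]] [t [Ht H2]].
      destruct (HA s t Hs Ht) as [Hst|Hts].
      + apply (pf_fun _ (proj2_sig t) y); auto.
      + apply (pf_fun _ (proj2_sig s) y); auto.
    - intros y1 y2 r1 r2 [s [Hs H1]] [t [Ht H2]].
      destruct (HA s t Hs Ht) as [Hst|Hts].
      + exists t; split; auto. apply (pf_add _ (proj2_sig t)); auto.
      + exists s; split; auto. apply (pf_add _ (proj2_sig s)); auto.
    - intros y r k [s [Hs H1]]. exists s; split; auto. apply (pf_scal _ (proj2_sig s)); auto.
    - intros y r [s [Hs H1]]. apply (pf_dom _ (proj2_sig s)); auto.
    - exists s0; split; auto. apply (pf_base _ (proj2_sig s0)). }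
  exists (exist _ U HU). intros s Hs y r H. simpl. exists s; auto.
Qed.

Section Ext.
Variable G : X -> R -> Prop.
Hypothesis HG : PF G.
Variable z : X.
Hypothesis Hz : forall r, ~ G z r.

Lemma G_zero : G vzero 0.
Proof. pose proof (pf_scal _ HG e (p e) 0 (pf_base _ HG)). rewrite rs_0 in H. rewrite Rmult_0_l in H. auto. Qed.

Lemma G_sub d1 r1 d2 r2 : G d1 r1 -> G d2 r2 -> G (vsub d1 d2) (r1 - r2).
Proof.
  intros H1 H2. unfold vsub. rewrite <- rs_opp. replace (r1 - r2) with (r1 + (-1) * r2) by ring.
  apply (pf_add _ HG); auto. apply (pf_scal _ HG); auto.
Qed.

Lemma ext_bound d1 r1 d2 r2 : G d1 r1 -> G d2 r2 -> r1 - p (vsub d1 z) <= p (vadd d2 z) - r2.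
Proof.
  intros H1 H2. pose proof (pf_dom _ HG _ _ (pf_add _ HG _ _ _ _ H1 H2)).
  assert (vadd d1 d2 = vadd (vsub d1 z) (vadd d2 z)).
  { unfold vsub. rewrite (vadd_comm d2 z), <- vadd_assoc, (vadd_assoc (vopp z)), vadd_oppl, vadd_0l. auto. }
  rewrite H0 in H. pose proof (sn_triangle i (vsub d1 z) (vadd d2 z)). lra.
Qed.

Definition Sset (v : R) : Prop := exists d rd, G d rd /\ v = rd - p (vsub d z).

Lemma c_exists : { c : R | (forall d rd, G d rd -> rd - p (vsub d z) <= c) /\
                           (forall d rd, G d rd -> c <= p (vadd d z) - rd) }.
Proof.
  assert (Hb : bound Sset).
  { exists (p (vadd vzero z) - 0). intros v [d [rd [H ->]]]. apply ext_bound; auto. apply G_zero. }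
  assert (Hne : exists v, Sset v).
  { exists (0 - p (vsub vzero z)). exists vzero, 0. split; auto. apply G_zero. }
  destruct (completeness Sset Hb Hne) as [c [Hub Hlub]].
  exists c. split.
  - intros d rd H. apply Hub. exists d, rd; auto.
  - intros d rd H. apply Hlub. intros v [d1 [r1 [H1 ->]]]. apply ext_bound; auto.
Qed.

Definition c0 := proj1_sig c_exists.

Definition Gext (y : X) (r : R) : Prop :=
  exists d rd k, G d rd /\ y = vadd d (rs k z) /\ r = rd + k * c0.

Lemma decomp_eq d k d' k' : vadd d (rs k z) = vadd d' (rs k' z) -> vsub d' d = rs (k - k') z.
Proof.
  intros H.
  assert (E1 : vsub d' d = vsub (vadd d' (rs k' z)) (vadd d (rs k' z))).
  { rewrite vsub_add_add, vsub_diag, vadd_0. auto. }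
  rewrite E1, <- H, vsub_add_add, vsub_diag, vadd_0l. unfold vsub. rewrite <- rs_opp, rs_rs, <- rs_add_r.
  f_equal. ring.
Qed.

Lemma PF_Gext : PF Gext.
Proof.
  destruct (proj2_sig c_exists) as [Hlo Hhi]. fold c0 in Hlo, Hhi.
  constructor.
  - intros y r1 r2 [d [rd [k [Hd [-> ->]]]]] [d' [rd' [k' [Hd' [Heq ->]]]]].
    pose proof (decomp_eq _ _ _ _ Heq) as E.
    destruct (Req_dec (k - k') 0) as [Hk|Hk].
    + rewrite Hk, rs_0 in E. apply vsub_eq0 in E. subst d'.
      rewrite (pf_fun _ HG _ _ _ Hd Hd'). assert (k = k') by lra. subst; auto.
    + exfalso. apply (Hz ((/ (k - k')) * (rd' - rd))).
      replace z with (rs (/ (k - k')) (vsub d' d)).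
      apply (pf_scal _ HG). apply G_sub; auto.
      rewrite E, rs_rs. replace (/ (k - k') * (k - k')) with 1 by (field; auto). apply rs_1.
  - intros y1 y2 r1 r2 [d1 [rd1 [k1 [H1 [-> ->]]]]] [d2 [rd2 [k2 [H2 [-> ->]]]]].
    exists (vadd d1 d2), (rd1 + rd2), (k1 + k2). split. apply (pf_add _ HG); auto.
    split. rewrite vadd_swap4, rs_add_r; auto. ring.
  - intros y r m [d [rd [k [H [-> ->]]]]]. exists (rs m d), (m * rd), (m * k).
    split. apply (pf_scal _ HG); auto. split. rewrite rs_add_v, rs_rs; auto. ring.
  - intros y r [d [rd [k [H [-> ->]]]]].
    destruct (Rtotal_order k 0) as [Hk|[Hk|Hk]].
    +
      set (m := - k). assert (Hm : m > 0) by (unfold m; lra).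
      pose proof (Hlo (rs (/ m) d) (/ m * rd) (pf_scal _ HG _ _ _ H)).
      assert (vsub (rs (/ m) d) z = rs (/ m) (vadd d (rs k z))).
      { rewrite rs_add_v, rs_rs. unfold vsub. rewrite <- rs_opp. f_equal. f_equal. unfold m. field. lra. }
      rewrite H1, p_rs, Rabs_right in H0 by (apply Rle_ge, Rlt_le, Rinv_0_lt_compat; lra).
      assert (Hmi : / m * (rd - p (vadd d (rs k z))) <= / m * (m * c0)).
      { replace (/ m * (m * c0)) with c0 by (field; lra). lra. }
      apply Rmult_le_reg_l in Hmi. 2: apply Rinv_0_lt_compat; lra. unfold m in Hmi. lra.
    + subst k. rewrite rs_0, vadd_0. replace (rd + 0 * c0) with rd by ring. apply (pf_dom _ HG); auto.
    + pose proof (Hhi (rs (/ k) d) (/ k * rd) (pf_scal _ HG _ _ _ H)).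
      assert (vadd (rs (/ k) d) z = rs (/ k) (vadd d (rs k z))).
      { rewrite rs_add_v, rs_rs. f_equal. replace (/ k * k) with 1 by (field; lra). rewrite rs_1; auto. }
      rewrite H1, p_rs, Rabs_right in H0 by (apply Rle_ge, Rlt_le, Rinv_0_lt_compat; lra).
      assert (Hmi : / k * (k * c0) <= / k * (p (vadd d (rs k z)) - rd)).
      { replace (/ k * (k * c0)) with c0 by (field; lra). lra. }
      apply Rmult_le_reg_l in Hmi. 2: apply Rinv_0_lt_compat; lra. lra.
  - exists e, (p e), 0. split. apply (pf_base _ HG). split. rewrite rs_0, vadd_0; auto. ring.
Qed.

Lemma Gext_ext y r : G y r -> Gext y r.
Proof. intros H. exists y, r, 0. split; auto. split. rewrite rs_0, vadd_0; auto. ring. Qed.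

Lemma Gext_z : Gext z c0.
Proof. exists vzero, 0, 1. split. apply G_zero. split. rewrite rs_1, vadd_0l; auto. ring. Qed.

End Ext.

Lemma real_HB : exists phi : X -> R,
  (forall y1 y2, phi (vadd y1 y2) = phi y1 + phi y2) /\
  (forall k y, phi (rs k y) = k * phi y) /\
  (forall y, phi y <= p y) /\ phi e = p e.
Proof.
  destruct (zorn_prop PFT (exist _ G0 PF_G0) PFle) as [[G HG] Hmax].
  - intros t y r; auto.
  - intros r s t H1 H2 y v H. auto.
  - apply chain_ub.
  - assert (Hdom : forall y, exists r, G y r).
    { intros y. apply NNPP. intros Hn.
      assert (Hz : forall r, ~ G y r) by (intros r Hr; apply Hn; eauto).
      pose proof (Hmax (exist _ (Gext G HG y) (PF_Gext G HG y Hz))) as Hm.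
      assert (PFle (exist _ G HG) (exist _ (Gext G HG y) (PF_Gext G HG y Hz))).
      { intros w v Hw. apply Gext_ext; auto. }
      specialize (Hm H). apply (Hz (c0 G HG y)). apply (Hm y). apply Gext_z. }
    set (phi := fun y => proj1_sig (constructive_indefinite_description _ (Hdom y))).
    assert (Hphi : forall y, G y (phi y)) by (intros; unfold phi; apply proj2_sig).
    exists phi. split; [|split; [|split]].
    + intros. apply (pf_fun _ HG (vadd y1 y2)); auto. apply (pf_add _ HG); auto.
    + intros. apply (pf_fun _ HG (rs k y)); auto. apply (pf_scal _ HG); auto.
    + intros. apply (pf_dom _ HG); auto.
    + apply (pf_fun _ HG e); auto. apply (pf_base _ HG).
Qed.

End HB.
Arguments rs {X} _ _.


Section CHB.
Context {X : LCS}.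
Definition Jm (y : X) : X := vscal (mkC 0 1) y.

Lemma vscal_decomp (a b : R) (y : X) : vscal (mkC a b) y = vadd (rs a y) (rs b (Jm y)).
Proof.
  unfold rs, Jm. rewrite vscal_assoc, <- vscal_distr_c. f_equal. unfold Cadd, Cmul; simpl; f_equal; ring.
Qed.

Lemma Jm_rs r (y : X) : Jm (rs r y) = rs r (Jm y).
Proof. unfold Jm, rs. rewrite !vscal_assoc. f_equal. unfold Cmul; simpl; f_equal; ring. Qed.

Lemma Jm_Jm (y : X) : Jm (Jm y) = rs (-1) y.
Proof. unfold Jm, rs. rewrite vscal_assoc. f_equal. unfold Cmul; simpl; f_equal; ring. Qed.

Lemma Jm_add (y z : X) : Jm (vadd y z) = vadd (Jm y) (Jm z).
Proof. apply vscal_distr_v. Qed.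

Lemma complex_HB (i : Idx X) (e : X) : sn i e > 0 ->
  exists f : X -> Cplx, is_linear_functional X f /\ (forall y, Cnorm (f y) <= sn i y) /\ Re (f e) = sn i e.
Proof.
  intros Hpe. destruct (real_HB X i e Hpe) as [phi [Hadd [Hsc [Hdom He]]]].
  set (f := fun y => mkC (phi y) (- phi (Jm y))).
  assert (Hlin : is_linear_functional X f).
  { split.
    - intros y z. unfold f, Cadd; simpl. rewrite Jm_add, !Hadd. f_equal; ring.
    - intros [a b] y. unfold f, Cmul; simpl. rewrite vscal_decomp, Jm_add, Jm_rs, Jm_rs, Jm_Jm, !Hadd, !Hsc.
      f_equal; ring.
  }
  exists f. split; auto. split.
  - intros y. destruct (Req_dec (Cnorm (f y)) 0) as [H0|H0].
    + rewrite H0. apply sn_nonneg.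
    + set (N := Cnorm (f y)).
      assert (HN : 0 < N) by (pose proof (Cnorm_nonneg (f y)); unfold N in *; lra).
      assert (HN2 : N * N = Re (f y) * Re (f y) + Im (f y) * Im (f y)).
      { unfold N, Cnorm. apply sqrt_sqrt. nra. }
      set (th := mkC (Re (f y) / N) (- Im (f y) / N)).
      assert (Hth : Cnorm th = 1).
      { unfold Cnorm, th; simpl. rewrite <- sqrt_1. f_equal. field_simplify; try lra.
        assert (HN3 : phi y ^ 2 + phi (Jm y) ^ 2 = N ^ 2) by (simpl in HN2; nra). rewrite HN3. field. lra. }
      assert (Hf : f (vscal th y) = Cmul th (f y)) by (apply (proj2 Hlin)).
      assert (HRe : Re (f (vscal th y)) = N).
      { rewrite Hf. unfold th, Cmul; simpl. field_simplify; try lra. assert (HN3 : phi y ^ 2 + phi (Jm y) ^ 2 = N ^ 2) by (simpl in HN2; nra). rewrite HN3. field. lra. }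
      assert (Re (f (vscal th y)) = phi (vscal th y)) by reflexivity.
      pose proof (Hdom (vscal th y)). rewrite sn_homog, Hth in H1. fold N. lra.
  - simpl. auto.
Qed.
End CHB.


Lemma exs_cmp (a b : nat -> R) : (forall n, Rabs (a n) <= b n) -> ex_series b -> ex_series a.
Proof. intros H Hb. apply (@Series.ex_series_le R_AbsRing R_CompleteNormedModule a b); auto. Qed.
Lemma ex_geom_scal M : ex_series (fun k => M * (/4)^k).
Proof.
  apply (Series.ex_series_scal_l M (fun k => (/4)^k)).
  apply Series.ex_series_geom. rewrite Rabs_right; lra.
Qed.
Lemma Series_geom_scal M : Series (fun k => M * (/4)^k) = M * (4/3).
Proof. rewrite Series_scal_l, Series_geom. field. rewrite Rabs_right; lra. Qed.

Section Dual.
Context {X : LCS}.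

Lemma lin_opp (f : X -> Cplx) : is_linear_functional X f -> forall x, f (vopp x) = Copp (f x).
Proof.
  intros [_ Hs] x. rewrite vopp_scal, Hs. unfold Cmul, Copp; simpl. f_equal; ring.
Qed.

Lemma lin_sub (f : X -> Cplx) : is_linear_functional X f -> forall x y, f (vsub y x) = Cadd (f y) (Copp (f x)).
Proof. intros Hl x y. unfold vsub. rewrite (proj1 Hl), lin_opp; auto. Qed.

Lemma dual_of_bound (f : X -> Cplx) (i : Idx X) (K : R) :
  is_linear_functional X f -> 0 <= K -> (forall y, Cnorm (f y) <= K * sn i y) -> in_dual X f.
Proof.
  intros Hl HK Hb. split; auto. intros x eps Heps.
  exists (i :: nil), (eps / (K + 1)). split. apply Rdiv_lt_0_compat; lra.
  intros y Hy. rewrite <- lin_sub by auto.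
  specialize (Hy i (or_introl eq_refl)). pose proof (Hb (vsub y x)).
  pose proof (sn_nonneg i (vsub y x)).
  assert (K * sn i (vsub y x) <= K * (eps / (K+1))) by (apply Rmult_le_compat_l; lra).
  assert (K * (eps / (K+1)) < eps).
  { apply (Rmult_lt_reg_r (K+1)). lra. field_simplify; lra. }
  lra.
Qed.

Lemma weak_bounded (E : X -> Prop) : relatively_weakly_compact X E ->
  forall f, in_dual X f -> exists M, forall e, E e -> Cnorm (f e) <= M.
Proof.
  intros Hc f Hf.
  destruct (Hc nat (fun n y => Cnorm (f y) < INR n)) as [l Hl].
  - intros n x Hx. exists (f :: nil), (INR n - Cnorm (f x)). split.
    { intros g [<-|[]]; auto. }
    split. lra.
    intros y Hy. specialize (Hy f (or_introl eq_refl)).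
    assert (Hfy : f y = Cadd (f x) (Cadd (f y) (Copp (f x)))).
    { unfold Cadd, Copp; simpl. destruct (f y); simpl; f_equal; ring. }
    rewrite Hfy. pose proof (Cnorm_triangle (f x) (Cadd (f y) (Copp (f x)))). lra.
  - intros x _. destruct (INR_unbounded (Cnorm (f x))) as [n Hn]. exists n. lra.
  - exists (INR (fold_right Nat.max 0%nat l)). intros e He.
    destruct (Hl e) as [j [Hj Hlt]].
    { intros U _ HU. exists e; auto. }
    assert (Hle : (j <= fold_right Nat.max 0 l)%nat).
    { clear -Hj. induction l; simpl in *. destruct Hj. destruct Hj as [->|Hj]. lia. specialize (IHl Hj). lia. }
    apply le_INR in Hle. lra.
Qed.
End Dual.


Fixpoint psum (a : nat -> R) (m : nat) : R :=
  match m with O => 0 | S m => psum a m + a m end.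

Lemma sum_f_psum a n : sum_f_R0 a n = psum a (S n).
Proof. induction n; simpl. ring. rewrite IHn. simpl. ring. Qed.

Lemma ex_scal_R (c : R) (a : nat -> R) : ex_series a -> ex_series (fun n => c * a n).
Proof. intros H. apply (Series.ex_series_scal_l c a); auto. Qed.

Section Hump.
Context {X : LCS}.
Variable E : X -> Prop.
Hypothesis Hwb : forall f, in_dual X f -> exists M, forall e, E e -> Cnorm (f e) <= M.
Variable i : Idx X.
Hypothesis Hunb : forall B, exists e, E e /\ sn i e > B.

Definition pick (B : R) : X := proj1_sig (constructive_indefinite_description _ (Hunb B)).
Lemma pick_spec B : E (pick B) /\ sn i (pick B) > B.
Proof. unfold pick. apply proj2_sig. Qed.

Lemma hb_ex (e : X) : exists f : X -> Cplx, sn i e > 0 ->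
  is_linear_functional X f /\ (forall y, Cnorm (f y) <= sn i y) /\ Re (f e) = sn i e.
Proof.
  destruct (classic (sn i e > 0)) as [H|H].
  - destruct (complex_HB i e H) as [f Hf]. exists f; auto.
  - exists (fun _ => Defs.C0). intros; contradiction.
Qed.
Definition hb (e : X) := proj1_sig (constructive_indefinite_description _ (hb_ex e)).
Lemma hb_spec e : sn i e > 0 ->
  is_linear_functional X (hb e) /\ (forall y, Cnorm (hb e y) <= sn i y) /\ Re (hb e e) = sn i e.
Proof. unfold hb. apply (proj2_sig (constructive_indefinite_description _ (hb_ex e))). Qed.

Lemma Mb_ex (f : X -> Cplx) : exists M, 0 <= M /\ (in_dual X f -> forall e, E e -> Cnorm (f e) <= M).
Proof.
  destruct (classic (in_dual X f)) as [H|H].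
  - destruct (Hwb f H) as [M HM]. exists (Rmax M 0). split. apply Rmax_r.
    intros _ e He. specialize (HM e He). pose proof (Rmax_l M 0). lra.
  - exists 0. split. lra. intros; contradiction.
Qed.
Definition Mb f := proj1_sig (constructive_indefinite_description _ (Mb_ex f)).
Lemma Mb_spec f : 0 <= Mb f /\ (in_dual X f -> forall e, E e -> Cnorm (f e) <= Mb f).
Proof. unfold Mb. apply (proj2_sig (constructive_indefinite_description _ (Mb_ex f))). Qed.

Definition cc (k : nat) : R := (/4)^k.
Definition bnd (m : nat) (a : R) : R := 2 * 4^m * (INR m + 1 + a).

Fixpoint acc (n : nat) : R :=
  match n with
  | O => 0
  | S m => acc m + cc m * Mb (hb (pick (bnd m (acc m))))
  end.

Definition en (n : nat) : X := pick (bnd n (acc n)).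
Definition fn (n : nat) : X -> Cplx := hb (en n).

Lemma cc_pos k : 0 < cc k.
Proof. unfold cc. apply pow_lt. lra. Qed.

Lemma acc_nonneg n : 0 <= acc n.
Proof. induction n; simpl. lra. pose proof (cc_pos n). pose proof (proj1 (Mb_spec (hb (pick (bnd n (acc n)))))). nra. Qed.

Lemma en_pos n : sn i (en n) > 0.
Proof.
  destruct (pick_spec (bnd n (acc n))) as [_ H]. fold (en n) in H.
  assert (0 <= bnd n (acc n)).
  { unfold bnd. pose proof (acc_nonneg n). pose proof (pos_INR n). pose proof (pow_le 4 n). nra. }
  lra.
Qed.

Lemma fn_spec n : is_linear_functional X (fn n) /\ (forall y, Cnorm (fn n y) <= sn i y) /\ Re (fn n (en n)) = sn i (en n).
Proof. apply hb_spec. apply en_pos. Qed.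

Lemma fn_dual n : in_dual X (fn n).
Proof.
  destruct (fn_spec n) as [Hl [Hb _]]. apply (dual_of_bound _ i 1); auto. lra.
  intros y. rewrite Rmult_1_l. auto.
Qed.

Lemma fn_Mb n e : E e -> Cnorm (fn n e) <= Mb (fn n).
Proof. intros He. apply (proj2 (Mb_spec (fn n))); auto. apply fn_dual. Qed.

Lemma Re_fn_bound n y : Rabs (Re (fn n y)) <= sn i y.
Proof. pose proof (Re_le_Cnorm (fn n y)). pose proof (proj1 (proj2 (fn_spec n)) y). lra. Qed.
Lemma Im_fn_bound n y : Rabs (Im (fn n y)) <= sn i y.
Proof. pose proof (Im_le_Cnorm (fn n y)). pose proof (proj1 (proj2 (fn_spec n)) y). lra. Qed.

Lemma ex_cR y : ex_series (fun k => cc k * Re (fn k y)).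
Proof.
  apply (exs_cmp _ (fun k => sn i y * (/4)^k)). 2: apply ex_geom_scal.
  intros k. rewrite Rabs_mult, Rabs_right by (apply Rle_ge, Rlt_le, cc_pos).
  pose proof (Re_fn_bound k y). pose proof (cc_pos k). unfold cc in *. nra.
Qed.
Lemma ex_cI y : ex_series (fun k => cc k * Im (fn k y)).
Proof.
  apply (exs_cmp _ (fun k => sn i y * (/4)^k)). 2: apply ex_geom_scal.
  intros k. rewrite Rabs_mult, Rabs_right by (apply Rle_ge, Rlt_le, cc_pos).
  pose proof (Im_fn_bound k y). pose proof (cc_pos k). unfold cc in *. nra.
Qed.

Lemma Series_bound (a : nat -> R) (M : R) : (forall k, Rabs (a k) <= M * cc k) ->
  Rabs (Series a) <= M * (4/3).
Proof.
  intros H. rewrite <- Series_geom_scal.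
  assert (Hex : ex_series (fun k => M * (/4)^k)) by apply ex_geom_scal.
  eapply Rle_trans. apply Series_Rabs. apply (exs_cmp _ (fun k => M * (/4)^k)); auto.
  intros k. rewrite Rabs_Rabsolu. apply H.
  apply Series_le; auto. intros k. split. apply Rabs_pos. apply H.
Qed.

Definition FF (y : X) : Cplx :=
  mkC (Series (fun k => cc k * Re (fn k y))) (Series (fun k => cc k * Im (fn k y))).

Lemma FF_lin : is_linear_functional X FF.
Proof.
  split.
  - intros y z. unfold FF, Cadd; simpl. f_equal.
    + rewrite <- Series_plus by (apply ex_cR). apply Series_ext. intros k.
      rewrite (proj1 (proj1 (fn_spec k))). simpl. ring.
    + rewrite <- Series_plus by (apply ex_cI). apply Series_ext. intros k.
      rewrite (proj1 (proj1 (fn_spec k))). simpl. ring.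
  - intros [a b] y. unfold FF, Cmul; simpl. f_equal.
    + rewrite <- !Series_scal_l, <- Series_minus.
      2,3: apply ex_scal_R; [apply ex_cR || apply ex_cI].
      apply Series_ext. intros k. rewrite (proj2 (proj1 (fn_spec k))). simpl. ring.
    + rewrite <- !Series_scal_l, <- Series_plus.
      2,3: apply ex_scal_R; [apply ex_cI || apply ex_cR].
      apply Series_ext. intros k. rewrite (proj2 (proj1 (fn_spec k))). simpl. ring.
Qed.

Lemma FF_bound y : Cnorm (FF y) <= (8/3) * sn i y.
Proof.
  eapply Rle_trans. apply Cnorm_le_sum. unfold FF; simpl.
  assert (Rabs (Series (fun k => cc k * Re (fn k y))) <= sn i y * (4/3)).
  { apply Series_bound. intros k. rewrite Rabs_mult, Rabs_right by (apply Rle_ge, Rlt_le, cc_pos).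
    pose proof (Re_fn_bound k y). pose proof (cc_pos k). nra. }
  assert (Rabs (Series (fun k => cc k * Im (fn k y))) <= sn i y * (4/3)).
  { apply Series_bound. intros k. rewrite Rabs_mult, Rabs_right by (apply Rle_ge, Rlt_le, cc_pos).
    pose proof (Im_fn_bound k y). pose proof (cc_pos k). nra. }
  lra.
Qed.

Lemma FF_dual : in_dual X FF.
Proof. apply (dual_of_bound _ i (8/3)). apply FF_lin. lra. apply FF_bound. Qed.

Lemma head_bound m e : E e -> Rabs (psum (fun k => cc k * Re (fn k e)) m) <= acc m.
Proof.
  intros He. induction m; simpl. rewrite Rabs_R0; lra.
  eapply Rle_trans. apply Rabs_triang.
  rewrite (Rabs_mult (cc m)), (Rabs_right (cc m)) by (apply Rle_ge, Rlt_le, cc_pos).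
  pose proof (fn_Mb m e He). pose proof (Re_le_Cnorm (fn m e)). pose proof (cc_pos m).
  unfold fn, en in *. nra.
Qed.

Lemma cc_S_plus n k : cc (S n + k) = cc n * / 4 * cc k.
Proof. unfold cc. rewrite pow_add. simpl. ring. Qed.

Lemma FF_large n : Re (FF (en n)) > INR n + 1.
Proof.
  unfold FF; simpl. set (a := fun k => cc k * Re (fn k (en n))).
  rewrite (Series_incr_n a (S n)) by (lia || apply ex_cR). simpl pred. rewrite sum_f_psum. simpl psum.
  assert (HE : E (en n)) by apply (proj1 (pick_spec _)).
  pose proof (head_bound n (en n) HE) as Hh. fold a in Hh.
  assert (Hn : a n = cc n * sn i (en n)) by (unfold a; rewrite (proj2 (proj2 (fn_spec n))); auto).
  assert (Ht : Rabs (Series (fun k => a (S n + k)%nat)) <= (cc n * / 4 * sn i (en n)) * (4/3)).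
  { apply Series_bound. intros k. unfold a. rewrite cc_S_plus, Rabs_mult.
    rewrite Rabs_right by (pose proof (cc_pos n); pose proof (cc_pos k); apply Rle_ge; nra).
    pose proof (Re_fn_bound (S n + k) (en n)). pose proof (cc_pos n); pose proof (cc_pos k).
    assert (0 <= cc n * / 4 * cc k) by nra. 
    replace (cc n * / 4 * sn i (en n) * cc k) with ((cc n * / 4 * cc k) * sn i (en n)) by ring.
    apply Rmult_le_compat_l; auto. }
  assert (Hs : sn i (en n) > bnd n (acc n)) by apply (proj2 (pick_spec _)).
  assert (Hcc : cc n * 4 ^ n = 1).
  { unfold cc. rewrite <- Rpow_mult_distr. replace (/4*4) with 1 by field. apply pow1. }
  pose proof (acc_nonneg n). pose proof (cc_pos n).
  assert (cc n * sn i (en n) > 2 * (INR n + 1 + acc n)).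
  { unfold bnd in Hs.
    assert (Heq : cc n * (2 * 4 ^ n * (INR n + 1 + acc n)) = 2 * (INR n + 1 + acc n) * (cc n * 4 ^ n)) by ring.
    rewrite Hcc, Rmult_1_r in Heq. rewrite <- Heq.
    apply Rmult_lt_compat_l; auto. }
  apply Rabs_inv in Hh. apply Rabs_inv in Ht. rewrite Hn. lra.
Qed.

Lemma hump_contra : False.
Proof.
  destruct (Hwb FF FF_dual) as [M HM].
  destruct (INR_unbounded M) as [n Hn].
  assert (HE : E (en n)) by apply (proj1 (pick_spec _)).
  specialize (HM _ HE). pose proof (FF_large n). pose proof (Re_le_Cnorm (FF (en n))).
  pose proof (Rle_abs (Re (FF (en n)))). lra.
Qed.
End Hump.

Lemma E_bounded {X : LCS} (E : X -> Prop) :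
  (forall f, in_dual X f -> exists M, forall e, E e -> Cnorm (f e) <= M) ->
  forall i, exists B, 0 <= B /\ forall e, E e -> sn i e <= B.
Proof.
  intros Hwb i. apply NNPP. intros Hn.
  apply (hump_contra E Hwb i). intros B. apply NNPP. intros Hb.
  apply Hn. exists (Rmax B 0). split. apply Rmax_r. intros e He.
  destruct (Rle_or_lt (sn i e) B). pose proof (Rmax_l B 0); lra.
  exfalso. apply Hb. exists e. split; auto.
Qed.


Lemma vsum_S {X : LCS} (f : nat -> X) n : vsum f (S n) = vadd (vsum f n) (f n).
Proof. reflexivity. Qed.

Section Chain.
Context {X : LCS}.
Variable x : R -> X.
Variables a b : R.

Definition pt (t : nat -> R) (k : nat) : X := vsub (x (t (2*k+2)%nat)) (x (t (2*k+1)%nat)).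

Definition EI (e : X) (c : R) : Prop :=
  e = vzero \/ exists n t, (n >= 1)%nat /\ a <= t 1%nat /\
    (forall k, (1 <= k < 2 * n)%nat -> t k < t (S k)) /\ t (2*n)%nat <= c /\ e = vsum (pt t) n.

Definition s01 (u : nat -> R) (eps : nat -> bool) (m : nat) : X :=
  vsum (fun k => if eps k then vsub (x (u (S k))) (x (u k)) else vzero) m.

Lemma chain_EI (u : nat -> R) (eps : nat -> bool) m :
  (forall k, (k <= m)%nat -> a <= u k) -> (forall k, (k < m)%nat -> u k <= u (S k)) ->
  EI (s01 u eps m) (u m).
Proof.
  induction m; intros Ha Hm.
  - left. reflexivity.
  - assert (IH : EI (s01 u eps m) (u m)) by (apply IHm; intros; [apply Ha|apply Hm]; lia).
    unfold s01. rewrite vsum_S. fold (s01 u eps m).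
    assert (Hum : u m <= u (S m)) by (apply Hm; lia).
    destruct (eps m).
    2: { rewrite vadd_0. destruct IH as [H|[n [t [H1 [H2 [H3 [H4 H5]]]]]]]. left; auto.
         right. exists n, t. repeat split; auto. lra. }
    destruct (Req_dec (u m) (u (S m))) as [Heq|Hne].
    { rewrite Heq, vsub_diag, vadd_0. rewrite <- Heq. auto. }
    assert (Hlt : u m < u (S m)) by lra.
    destruct IH as [H|[n [t [H1 [H2 [H3 [H4 H5]]]]]]].
    + right. rewrite H, vadd_0l. exists 1%nat, (fun k => if Nat.eqb k 1 then u m else u (S m)).
      simpl. repeat split; try lia.
      * apply Ha; lia.
      * intros k Hk. assert (k = 1%nat) by lia. subst. simpl. auto.
      * lra.
      * unfold pt. simpl. rewrite vadd_0l. auto.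
    + right. destruct (Rle_lt_or_eq_dec _ _ H4) as [H4'|H4'].
      * exists (S n), (fun k => if Nat.eqb k (2*n+1) then u m else if Nat.eqb k (2*n+2) then u (S m) else t k).
        repeat split.
        -- lia.
        -- destruct (Nat.eqb_spec 1 (2*n+1)); [lia|]. destruct (Nat.eqb_spec 1 (2*n+2)); [lia|]. auto.
        -- intros k Hk.
           destruct (Nat.eqb_spec k (2*n+1)); destruct (Nat.eqb_spec (S k) (2*n+1));
           destruct (Nat.eqb_spec k (2*n+2)); destruct (Nat.eqb_spec (S k) (2*n+2)); try lia.
           all: try (apply H3; lia). all: try (replace k with (2*n)%nat by lia; auto). all: try lra.


        -- destruct (Nat.eqb_spec (2 * S n) (2*n+1)); [lia|]. destruct (Nat.eqb_spec (2 * S n) (2*n+2)); [|lia]. lra.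
        -- rewrite vsum_S, H5. f_equal.
           ++ apply vsum_ext. intros k Hk. unfold pt.
              destruct (Nat.eqb_spec (2*k+2) (2*n+1)); [lia|]. destruct (Nat.eqb_spec (2*k+2) (2*n+2)); [lia|].
              destruct (Nat.eqb_spec (2*k+1) (2*n+1)); [lia|]. destruct (Nat.eqb_spec (2*k+1) (2*n+2)); [lia|]. auto.
           ++ unfold pt. rewrite Nat.eqb_refl. destruct (Nat.eqb_spec (2*n+2) (2*n+1)); [lia|]. rewrite Nat.eqb_refl. auto.
      * destruct n as [|n0]; [lia|].
        exists (S n0), (fun k => if Nat.eqb k (2 * S n0) then u (S m) else t k).
        repeat split.
        -- lia.
        -- destruct (Nat.eqb_spec 1 (2 * S n0)); [lia|]. auto.
        -- intros k Hk.
           destruct (Nat.eqb_spec k (2 * S n0)); destruct (Nat.eqb_spec (S k) (2 * S n0)); try lia.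
           ++ rewrite <- e in H4'. pose proof (H3 k Hk). lra.
           ++ apply H3; lia.
        -- rewrite Nat.eqb_refl. lra.
        -- rewrite vsum_S, H5, vsum_S.
           assert (Hv : vsum (pt (fun k => if Nat.eqb k (2 * S n0) then u (S m) else t k)) n0 = vsum (pt t) n0).
           { apply vsum_ext. intros k Hk. unfold pt.
             destruct (Nat.eqb_spec (2*k+2) (2 * S n0)); [lia|]. destruct (Nat.eqb_spec (2*k+1) (2 * S n0)); [lia|]. auto. }
           rewrite Hv. rewrite <- vadd_assoc. f_equal. unfold pt.
           destruct (Nat.eqb_spec (2*n0+2) (2 * S n0)); [|lia].
           destruct (Nat.eqb_spec (2*n0+1) (2 * S n0)); [lia|].
           replace (2*n0+2)%nat with (2 * S n0)%nat by lia. rewrite H4'.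
           rewrite vadd_comm. apply vsub_chain.
Qed.

Lemma chain_Eab (u : nat -> R) (eps : nat -> bool) m :
  (forall k, (k <= m)%nat -> a <= u k <= b) -> (forall k, (k < m)%nat -> u k <= u (S k)) ->
  s01 u eps m = vzero \/ Eab X x a b (s01 u eps m).
Proof.
  intros Hab Hm. destruct (chain_EI u eps m) as [H|[n [t [H1 [H2 [H3 [H4 H5]]]]]]]; auto.
  intros; apply Hab; auto.
  right. exists n, t. split; [auto|split;[auto|split;[auto|split]]].
  assert (u m <= b) by (apply Hab; lia). lra.
  rewrite H5. apply vsum_ext. intros k _. unfold pt. auto.
Qed.
End Chain.


Section Convex.
Context {X : LCS}.
Variable i : Idx X.

Lemma rs_vopp r (v : X) : rs r (vopp v) = rs (- r) v.
Proof. rewrite <- rs_opp, rs_rs. f_equal; ring. Qed.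

Lemma convex_identity (P v : X) (c : R) :
  vadd P (rs c v) = vadd (rs ((1 - c)/2) (vadd P (vopp v))) (rs ((1 + c)/2) (vadd P v)).
Proof.
  rewrite !rs_add_v, rs_vopp, vadd_swap4, <- rs_add_r, (vadd_comm (rs _ v)), <- rs_add_r.
  replace ((1 - c) / 2 + (1 + c) / 2) with 1 by field. rewrite rs_1. f_equal. f_equal. field.
Qed.

Lemma reassoc (w q S : X) : vadd w (vadd S q) = vadd (vadd w q) S.
Proof. rewrite (vadd_comm S q). apply vadd_assoc. Qed.

Lemma convex_pm (v : nat -> X) (M : R) m : forall w,
  (forall eps : nat -> bool, sn i (vadd w (vsum (fun k => if eps k then v k else vopp (v k)) m)) <= M) ->
  forall c, (forall k, (k < m)%nat -> -1 <= c k <= 1) ->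
  sn i (vadd w (vsum (fun k => rs (c k) (v k)) m)) <= M.
Proof.
  induction m; intros w Hw c Hc.
  - apply (Hw (fun _ => true)).
  - rewrite vsum_S. set (S := vsum (fun k => rs (c k) (v k)) m).
    assert (Hc' : forall k, (k < m)%nat -> -1 <= c k <= 1) by (intros; apply Hc; lia).
    assert (H1 : sn i (vadd (vadd w (vopp (v m))) S) <= M).
    { apply IHm; auto. intros eps. specialize (Hw (fun k => if Nat.eqb k m then false else eps k)).
      rewrite vsum_S, Nat.eqb_refl, reassoc in Hw.
      erewrite vsum_ext; [exact Hw|]. intros k Hk. simpl. destruct (Nat.eqb_spec k m); [lia|auto]. }
    assert (H2 : sn i (vadd (vadd w (v m)) S) <= M).
    { apply IHm; auto. intros eps. specialize (Hw (fun k => if Nat.eqb k m then true else eps k)).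
      rewrite vsum_S, Nat.eqb_refl, reassoc in Hw.
      erewrite vsum_ext; [exact Hw|]. intros k Hk. simpl. destruct (Nat.eqb_spec k m); [lia|auto]. }
    rewrite vadd_assoc, (convex_identity (vadd w S) (v m) (c m)).
    assert (Sw : forall q, vadd (vadd w S) q = vadd (vadd w q) S).
    { intros q. rewrite <- !vadd_assoc, (vadd_comm S q). auto. }
    rewrite !Sw.
    eapply Rle_trans. apply sn_triangle. rewrite !p_rs.
    assert (Hcm : -1 <= c m <= 1) by (apply Hc; lia).
    rewrite (Rabs_right ((1 - c m)/2)) by lra. rewrite (Rabs_right ((1 + c m)/2)) by lra.
    nra.
Qed.
End Convex.

Section Coef.
Context {X : LCS}.
Variable x : R -> X.
Variables a b : R.
Variable i : Idx X.
Variable B : R.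
Hypothesis HB0 : 0 <= B.
Hypothesis HB : forall e, Eab X x a b e -> sn i e <= B.

Definition Dl (u : nat -> R) (k : nat) : X := vsub (x (u (S k))) (x (u k)).

Section Part.
Variable u : nat -> R.
Variable m : nat.
Hypothesis Hab : forall k, (k <= m)%nat -> a <= u k <= b.
Hypothesis Hmono : forall k, (k < m)%nat -> u k <= u (S k).

Lemma s01_bound eps : sn i (s01 x u eps m) <= B.
Proof.
  destruct (chain_Eab x a b u eps m Hab Hmono) as [H|H].
  rewrite H, sn_zero; auto. apply HB; auto.
Qed.

Lemma real_coef_bound (c : nat -> R) : (forall k, (k < m)%nat -> -1 <= c k <= 1) ->
  sn i (vsum (fun k => rs (c k) (Dl u k)) m) <= 2 * B.
Proof.
  intros Hc. rewrite <- (vadd_0l (vsum _ m)). apply convex_pm; auto.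
  intros eps. rewrite vadd_0l.
  assert (vsum (fun k => if eps k then Dl u k else vopp (Dl u k)) m =
          vsub (s01 x u eps m) (s01 x u (fun k => negb (eps k)) m)).
  { unfold s01. rewrite <- vsum_sub. apply vsum_ext. intros k _. unfold Dl.
    destruct (eps k); simpl; unfold vsub. rewrite vopp_zero, vadd_0; auto. rewrite vadd_0l; auto. }
  rewrite H. eapply Rle_trans. apply sn_sub_le. pose proof (s01_bound eps). pose proof (s01_bound (fun k => negb (eps k))). lra.
Qed.

Lemma real_coef_bound_eta (c : nat -> R) (eta : R) : 0 < eta -> (forall k, (k < m)%nat -> Rabs (c k) <= eta) ->
  sn i (vsum (fun k => rs (c k) (Dl u k)) m) <= 2 * B * eta.
Proof.
  intros He Hc.
  assert (vsum (fun k => rs (c k) (Dl u k)) m = rs eta (vsum (fun k => rs (c k / eta) (Dl u k)) m)).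
  { unfold rs at 2. rewrite <- vsum_scal. apply vsum_ext. intros k _. fold (rs eta (rs (c k / eta) (Dl u k))).
    rewrite rs_rs. f_equal. field. lra. }
  rewrite H, p_rs, Rabs_right by lra.
  assert (sn i (vsum (fun k => rs (c k / eta) (Dl u k)) m) <= 2 * B).
  { apply real_coef_bound. intros k Hk. specialize (Hc k Hk). apply Rabs_inv in Hc. 
    split; [apply (Rmult_le_reg_r eta); [lra|]; field_simplify; lra|apply (Rmult_le_reg_r eta); [lra|]; field_simplify; lra]. }
  nra.
Qed.

Lemma coef_bound (e : nat -> Cplx) (eta : R) : 0 < eta -> (forall k, (k < m)%nat -> Cnorm (e k) <= eta) ->
  sn i (vsum (fun k => vscal (e k) (Dl u k)) m) <= 4 * B * eta.
Proof.
  intros He Hc.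
  assert (vsum (fun k => vscal (e k) (Dl u k)) m =
          vadd (vsum (fun k => rs (Re (e k)) (Dl u k)) m) (Jm (vsum (fun k => rs (Im (e k)) (Dl u k)) m))).
  { unfold Jm. rewrite <- vsum_scal, <- vsum_add. apply vsum_ext. intros k _.
    destruct (e k) as [p q]. rewrite vscal_decomp. simpl. f_equal. fold (Jm (rs q (Dl u k))). rewrite Jm_rs. auto. }
  rewrite H. eapply Rle_trans. apply sn_triangle. unfold Jm at 1. rewrite sn_homog.
  replace (Cnorm (mkC 0 1)) with 1 by (unfold Cnorm; simpl; replace (0*0+1*1) with 1 by ring; symmetry; apply sqrt_1).
  assert (sn i (vsum (fun k => rs (Re (e k)) (Dl u k)) m) <= 2 * B * eta).
  { apply real_coef_bound_eta; auto. intros k Hk. pose proof (Re_le_Cnorm (e k)). pose proof (Hc k Hk). lra. }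
  assert (sn i (vsum (fun k => rs (Im (e k)) (Dl u k)) m) <= 2 * B * eta).
  { apply real_coef_bound_eta; auto. intros k Hk. pose proof (Im_le_Cnorm (e k)). pose proof (Hc k Hk). lra. }
  lra.
Qed.
End Part.
End Coef.


Definition mono (u : nat -> R) (m : nat) : Prop := forall k, (k < m)%nat -> u k <= u (S k).

Lemma mono_le u m : mono u m -> forall k1 k2, (k1 <= k2 <= m)%nat -> u k1 <= u k2.
Proof.
  intros H k1 k2 [H1 H2]. induction k2. assert (k1 = 0%nat) by lia. subst; lra.
  destruct (Nat.eq_dec k1 (S k2)). subst; lra.
  assert (u k1 <= u k2) by (apply IHk2; lia). pose proof (H k2 ltac:(lia)). lra.
Qed.

Section Merge.
Context {X : LCS}.
Variable x : R -> X.

Definition WS (u : nat -> R) (c : nat -> Cplx) (m : nat) : X := vsum (fun k => vscal (c k) (Dl x u k)) m.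

Lemma WS_const u c m al : (forall k, (k <= m)%nat -> u k = al) -> WS u c m = vzero.
Proof.
  intros H. unfold WS. rewrite <- (vsum_zero m). apply vsum_ext. intros k Hk. unfold Dl.
  rewrite (H k), (H (S k)) by lia. rewrite vsub_diag, vscal_zero. auto.
Qed.

Lemma WS_shift u c m : WS u c (S m) = vadd (vscal (c O) (Dl x u O)) (WS (fun k => u (S k)) (fun k => c (S k)) m).
Proof. unfold WS. rewrite vsum_shift. auto. Qed.

Lemma vscal_Csub (c d : Cplx) (y : X) : vscal (Cadd c (Copp d)) y = vsub (vscal c y) (vscal d y).
Proof.
  rewrite vscal_distr_c. unfold vsub. f_equal.
  replace (Copp d) with (Cmul (mkC (-1) 0) d) by (unfold Cmul, Copp; simpl; f_equal; ring).
  rewrite <- vscal_assoc, <- vopp_scal. auto.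
Qed.

Lemma Dl_split (u : nat -> R) (d : Cplx) (p q r : R) :
  vscal d (vsub (x r) (x p)) = vadd (vscal d (vsub (x r) (x q))) (vscal d (vsub (x q) (x p))).
Proof. rewrite <- vscal_distr_v, vsub_chain. auto. Qed.

Lemma merge N : forall m n, (m + n <= N)%nat -> forall u v c d, u O = v O -> u m = v n -> mono u m -> mono v n ->
  exists r w e, w O = u O /\ w r = u m /\ mono w r /\ vsub (WS u c m) (WS v d n) = WS w e r /\
   forall j, (j < r)%nat -> exists k l, (k < m)%nat /\ (l < n)%nat /\ e j = Cadd (c k) (Copp (d l)) /\
     u k <= w j /\ w (S j) <= u (S k) /\ v l <= w j /\ w (S j) <= v (S l).
Proof.
  induction N; intros m n Hmn u v c d H0 Hend Hu Hv.
  - assert (m = 0%nat) by lia. assert (n = 0%nat) by lia. subst.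
    exists 0%nat, u, c. split; auto. split; auto. split. intros k Hk; lia. split.
    unfold WS; simpl. apply vsub_diag. intros j Hj; lia.
  - destruct m as [|m']; [|destruct n as [|n']].
    + exists 0%nat, u, c. split; auto. split; auto. split. intros k Hk; lia. split.
      * rewrite (WS_const v d n (u O)). unfold WS; simpl. apply vsub_diag.
        intros k Hk. pose proof (mono_le v n Hv 0 k ltac:(lia)). pose proof (mono_le v n Hv k n ltac:(lia)).
        lra.
      * intros j Hj; lia.
    + exists 0%nat, u, c. split; auto. split. rewrite Hend, <- H0; auto. split. intros k Hk; lia. split.
      * rewrite (WS_const u c (S m') (u O)). unfold WS; simpl. apply vsub_diag.
        intros k Hk. pose proof (mono_le u (S m') Hu 0 k ltac:(lia)). pose proof (mono_le u (S m') Hu k (S m') ltac:(lia)).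
        lra.
      * intros j Hj; lia.
    + assert (Hu01 : u O <= u 1%nat) by (apply Hu; lia).
      assert (Hv01 : v O <= v 1%nat) by (apply Hv; lia).
      destruct (Rle_or_lt (u 1%nat) (v 1%nat)) as [Hle|Hlt].
      * set (v' := fun k => match k with O => u 1%nat | S k => v (S k) end).
        destruct (IHN m' (S n') ltac:(lia) (fun k => u (S k)) v' (fun k => c (S k)) d) as [r [w [e [Hw0 [Hwr [Hwm [Heq Hp]]]]]]].
        { simpl. auto. }
        { simpl. auto. }
        { intros k Hk. apply Hu. lia. }
        { intros [|k] Hk; simpl. auto. apply Hv; lia. }
        exists (S r), (fun j => match j with O => u O | S j => w j end),
               (fun j => match j with O => Cadd (c O) (Copp (d O)) | S j => e j end).
        split; auto. split. simpl. rewrite Hwr. auto. split.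
        { intros [|j] Hj; simpl. rewrite Hw0. auto. apply Hwm. lia. }
        split.
        { rewrite !WS_shift. change (WS (fun k => w k) (fun k => e k) r) with (WS w e r).
          rewrite <- Heq, (WS_shift v'). unfold Dl, v'. simpl. rewrite Hw0, <- H0.
          rewrite (Dl_split u (d O) (u O) (u 1%nat) (v 1%nat)).
          rewrite vscal_Csub.
          set (A := vscal (c O) (vsub (x (u 1%nat)) (x (u O)))).
          set (D0 := vscal (d O) (vsub (x (u 1%nat)) (x (u O)))).
          set (D1 := vscal (d O) (vsub (x (v 1%nat)) (x (u 1%nat)))).
          set (U := WS (fun k => u (S k)) (fun k => c (S k)) m').
          set (T := WS (fun k => v (S k)) (fun k => d (S k)) n').
          rewrite (vadd_comm D1 D0), <- vadd_assoc. apply vsub_add_add. }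
        intros [|j] Hj.
        { exists 0%nat, 0%nat. simpl. rewrite Hw0. repeat split; try lia; try lra. }
        { destruct (Hp j ltac:(lia)) as [k [l [Hk [Hl [He [H1 [H2 [H3 H4]]]]]]]].
          exists (S k), l. simpl. repeat split; try lia; auto.
          destruct l as [|l]; simpl in H3. rewrite <- H0. lra. auto.
        }
      * set (u' := fun k => match k with O => v 1%nat | S k => u (S k) end).
        destruct (IHN (S m') n' ltac:(lia) u' (fun k => v (S k)) c (fun k => d (S k))) as [r [w [e [Hw0 [Hwr [Hwm [Heq Hp]]]]]]].
        { simpl. auto. }
        { simpl. auto. }
        { intros [|k] Hk; simpl. lra. apply Hu; lia. }
        { intros k Hk. apply Hv. lia. }
        exists (S r), (fun j => match j with O => u O | S j => w j end),
               (fun j => match j with O => Cadd (c O) (Copp (d O)) | S j => e j end).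
        split; auto. split. simpl. rewrite Hwr. auto. split.
        { intros [|j] Hj; simpl. rewrite Hw0. simpl. lra. apply Hwm. lia. }
        split.
        { rewrite !WS_shift. change (WS (fun k => w k) (fun k => e k) r) with (WS w e r).
          rewrite <- Heq, (WS_shift u'). unfold Dl, u'. simpl. rewrite Hw0, H0.
          rewrite (Dl_split u (c O) (v O) (v 1%nat) (u 1%nat)).
          rewrite vscal_Csub.
          set (C0 := vscal (c O) (vsub (x (v 1%nat)) (x (v O)))).
          set (D0 := vscal (d O) (vsub (x (v 1%nat)) (x (v O)))).
          set (C1 := vscal (c O) (vsub (x (u 1%nat)) (x (v 1%nat)))).
          set (U := WS (fun k => u (S k)) (fun k => c (S k)) m').
          set (T := WS (fun k => v (S k)) (fun k => d (S k)) n').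
          rewrite (vadd_comm C1 C0), <- vadd_assoc. apply vsub_add_add. }
        intros [|j] Hj.
        { exists 0%nat, 0%nat. simpl. rewrite Hw0. simpl. repeat split; try lia; try lra. }
        { destruct (Hp j ltac:(lia)) as [k [l [Hk [Hl [He [H1 [H2 [H3 H4]]]]]]]].
          exists k, (S l). simpl. repeat split; try lia; auto.
          destruct k as [|k]; simpl in H1. rewrite H0. lra. auto.
        }
Qed.
End Merge.


Section Unif.
Variables a b : R.
Hypothesis Hab : a <= b.
Definition clamp (t : R) : R := Rmax a (Rmin b t).

Lemma clamp_in t : a <= clamp t <= b.
Proof. unfold clamp, Rmax, Rmin. destruct (Rle_dec b t); destruct (Rle_dec a _); lra. Qed.
Lemma clamp_id t : a <= t <= b -> clamp t = t.
Proof. intros H. unfold clamp, Rmax, Rmin. destruct (Rle_dec b t); destruct (Rle_dec a _); lra. Qed.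
Lemma Rmin_lip c s t : Rabs (Rmin c s - Rmin c t) <= Rabs (s - t).
Proof. unfold Rmin. destruct (Rle_dec c s); destruct (Rle_dec c t); unfold Rabs; repeat destruct (Rcase_abs _); lra. Qed.
Lemma Rmax_lip c s t : Rabs (Rmax c s - Rmax c t) <= Rabs (s - t).
Proof. unfold Rmax. destruct (Rle_dec c s); destruct (Rle_dec c t); unfold Rabs; repeat destruct (Rcase_abs _); lra. Qed.
Lemma clamp_lip s t : Rabs (clamp s - clamp t) <= Rabs (s - t).
Proof. unfold clamp. eapply Rle_trans. apply Rmax_lip. apply Rmin_lip. Qed.

Variable g : R -> Cplx.
Hypothesis Hg : continuous_on_C g a b.

Lemma cont_comp (h : Cplx -> R) : (forall z, Rabs (h z) <= Cnorm z) -> (forall z w, h (Cadd z (Copp w)) = h z - h w) ->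
  forall t, a <= t <= b -> continuity_pt (fun s => h (g (clamp s))) t.
Proof.
  intros Hh Hlin t Ht. unfold continuity_pt, continue_in, limit1_in, limit_in. simpl. unfold R_dist.
  intros eps Heps. destruct (Hg t Ht eps Heps) as [del [Hdel Hd]]. exists del. split; auto.
  intros y [_ Hy]. rewrite (clamp_id t Ht). rewrite <- Hlin.
  eapply Rle_lt_trans. apply Hh. apply Hd. apply clamp_in.
  pose proof (clamp_lip y t) as Hc. rewrite (clamp_id t Ht) in Hc. lra.
Qed.

Lemma g_unif eps : eps > 0 -> exists del, del > 0 /\ forall u v, a <= u <= b -> a <= v <= b -> Rabs (u - v) < del ->
  Cnorm (Cadd (g u) (Copp (g v))) < eps.
Proof.
  intros He.
  assert (He2 : 0 < eps / 2) by lra.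
  destruct (@Heine_cor2 (fun s => Re (g (clamp s))) a b (cont_comp Re (fun z => Re_le_Cnorm z) (fun z w => eq_refl)) (mkposreal _ He2)) as [d1 H1].
  destruct (@Heine_cor2 (fun s => Im (g (clamp s))) a b (cont_comp Im (fun z => Im_le_Cnorm z) (fun z w => eq_refl)) (mkposreal _ He2)) as [d2 H2].
  exists (Rmin d1 d2). split. apply Rmin_pos; apply cond_pos.
  intros u v Hu Hv Huv. simpl in H1, H2.
  specialize (H1 u v Hu Hv ltac:(pose proof (Rmin_l d1 d2); lra)).
  specialize (H2 u v Hu Hv ltac:(pose proof (Rmin_r d1 d2); lra)).
  rewrite !clamp_id in H1, H2 by auto.
  eapply Rle_lt_trans. apply Cnorm_le_sum. simpl. unfold Rminus in H1, H2. lra.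
Qed.
End Unif.

Section Key.
Context {X : LCS}.
Variable x : R -> X.
Variables a b : R.
Variable i : Idx X.
Variable B : R.
Hypothesis HB0 : 0 <= B.
Hypothesis HB : forall e, Eab X x a b e -> sn i e <= B.
Variable g : R -> Cplx.

Lemma div_mono n t s : tagged_division a b n t s -> mono t n.
Proof. intros [_ [_ [Hm _]]] k Hk. apply (Hm (S k)). lia. Qed.

Lemma div_in n t s : tagged_division a b n t s -> forall k, (k <= n)%nat -> a <= t k <= b.
Proof.
  intros Hd k Hk. pose proof (div_mono _ _ _ Hd) as Hm. destruct Hd as [H0 [Hn _]].
  pose proof (mono_le t n Hm 0 k ltac:(lia)). pose proof (mono_le t n Hm k n ltac:(lia)). lra.
Qed.

Lemma key (eps del : R) : eps > 0 -> del > 0 ->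
  (forall u v, a <= u <= b -> a <= v <= b -> Rabs (u - v) < 2 * del -> Cnorm (Cadd (g u) (Copp (g v))) < eps) ->
  forall n t s n' t' s', tagged_division a b n t s -> mesh_lt n t del ->
  tagged_division a b n' t' s' -> mesh_lt n' t' del ->
  sn i (vsub (RS_sum X g x n t s) (RS_sum X g x n' t' s')) <= 4 * B * eps.
Proof.
  intros Heps Hdel Hg n t s n' t' s' Hd Hm Hd' Hm'.
  change (RS_sum X g x n t s) with (WS x t (fun k => g (s (S k))) n).
  change (RS_sum X g x n' t' s') with (WS x t' (fun k => g (s' (S k))) n').
  pose proof (div_in _ _ _ Hd) as Hin. pose proof (div_in _ _ _ Hd') as Hin'.
  pose proof (div_mono _ _ _ Hd) as Hmo. pose proof (div_mono _ _ _ Hd') as Hmo'.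
  destruct Hd as [Ht0 [Htn [_ Hs]]]. destruct Hd' as [Ht0' [Htn' [_ Hs']]].
  destruct (merge x (n + n') n n' (le_n _) t t' (fun k => g (s (S k))) (fun k => g (s' (S k))))
    as [r [w [e [Hw0 [Hwr [Hwm [Heq Hp]]]]]]].
  - congruence.
  - congruence.
  - exact Hmo.
  - exact Hmo'.
  - rewrite Heq. unfold WS. apply (coef_bound x a b i B HB0 HB w r); auto.
    + intros k Hk. pose proof (mono_le w r Hwm 0 k ltac:(lia)). pose proof (mono_le w r Hwm k r ltac:(lia)).
      rewrite Hw0, Ht0 in *. rewrite Hwr, Htn in *. lra.
    + intros j Hj. destruct (Hp j Hj) as [k [l [Hk [Hl [He [H1 [H2 [H3 H4]]]]]]]].
      rewrite He. apply Rlt_le.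
      pose proof (Hs (S k) ltac:(lia)). pose proof (Hs' (S l) ltac:(lia)). simpl pred in *.
      pose proof (Hm (S k) ltac:(lia)). pose proof (Hm' (S l) ltac:(lia)). simpl pred in *.
      pose proof (Hin k ltac:(lia)). pose proof (Hin (S k) ltac:(lia)).
      pose proof (Hin' l ltac:(lia)). pose proof (Hin' (S l) ltac:(lia)).
      assert (w j <= w (S j)) by (apply Hwm; auto).
      apply Hg; try lra.
      unfold Rabs; destruct (Rcase_abs _); lra.
Qed.
End Key.


Lemma mesh_mono n t d1 d2 : d1 <= d2 -> mesh_lt n t d1 -> mesh_lt n t d2.
Proof. intros H Hm k Hk. specialize (Hm k Hk). lra. Qed.

Lemma div_exists a b del : a <= b -> del > 0 -> exists n t s, tagged_division a b n t s /\ mesh_lt n t del.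
Proof.
  intros Hab Hd. destruct (INR_unbounded ((b - a) / del)) as [M HM].
  set (n := S M). assert (Hn : 0 < INR n) by (unfold n; apply lt_0_INR; lia).
  assert (HnM : INR M < INR n) by (unfold n; apply lt_INR; lia).
  set (t := fun k => a + INR k * (b - a) / INR n).
  exists n, t, t. split.
  - split; [|split; [|split]].
    + unfold t. rewrite INR_0. unfold Rdiv. ring.
    + unfold t. field. lra.
    + intros k Hk. unfold t. destruct k as [|k]; [lia|]. simpl pred. rewrite S_INR.
      apply Rplus_le_compat_l. unfold Rdiv. apply Rmult_le_compat_r. left; apply Rinv_0_lt_compat; lra.
      apply Rmult_le_compat_r; lra.
    + intros k Hk. split; [|lra]. unfold t. destruct k as [|k]; [lia|]. simpl pred. rewrite S_INR.
      apply Rplus_le_compat_l. unfold Rdiv. apply Rmult_le_compat_r. left; apply Rinv_0_lt_compat; lra.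
      apply Rmult_le_compat_r; lra.
  - intros k Hk. unfold t. destruct k as [|k]; [lia|]. simpl pred. rewrite S_INR.
    replace (a + (INR k + 1) * (b - a) / INR n - (a + INR k * (b - a) / INR n)) with ((b - a) / INR n) by (field; lra).
    destruct (Req_dec (b - a) 0). rewrite H. unfold Rdiv; rewrite Rmult_0_l; lra.
    apply (Rmult_lt_reg_r (INR n)); auto. unfold Rdiv. rewrite Rmult_assoc, Rinv_l, Rmult_1_r by lra.
    apply (Rmult_lt_reg_r (/ del)). apply Rinv_0_lt_compat; lra.
    replace (del * INR n * / del) with (INR n) by (field; lra). unfold Rdiv in HM. lra.
Qed.

Fixpoint ddf (df : nat -> R) (N : nat) : R :=
  match N with O => df O | S M => Rmin (ddf df M) (df (S M)) end.

Lemma ddf_pos df : (forall N, df N > 0) -> forall N, ddf df N > 0.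
Proof. intros H N; induction N; simpl; auto. apply Rmin_pos; auto. apply H. Qed.
Lemma ddf_le df N : ddf df N <= df N.
Proof. destruct N; simpl. lra. apply Rmin_r. Qed.
Lemma ddf_anti df N m : (N <= m)%nat -> ddf df m <= ddf df N.
Proof. intros H; induction H. lra. simpl. pose proof (Rmin_l (ddf df m) (df (S m))). lra. Qed.

Theorem corollary1 (X : LCS) (a b : R) (x : R -> X) :
  a <= b ->
  sequentially_complete X ->
  weakly_compact_semivariation X x a b ->
  forall g : R -> Cplx, continuous_on_C g a b ->
  RS_integrable X g x a b.
Proof.
  intros Hab Hsc Hwc g Hg.
  pose proof (E_bounded (Eab X x a b) (weak_bounded _ Hwc)) as HBd.
  assert (Hdf : forall N : nat, exists del, del > 0 /\ forall u v, a <= u <= b -> a <= v <= b ->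
            Rabs (u - v) < 2 * del -> Cnorm (Cadd (g u) (Copp (g v))) < / (INR N + 1)).
  { intros N. destruct (g_unif a b Hab g Hg (/ (INR N + 1))) as [d [Hd Hdd]].
    apply Rinv_0_lt_compat. pose proof (pos_INR N); lra.
    exists (d / 2). split. lra. intros u v Hu Hv Huv. apply Hdd; auto. lra. }
  set (df := fun N => proj1_sig (constructive_indefinite_description _ (Hdf N))).
  assert (Hdfp : forall N, df N > 0 /\ forall u v, a <= u <= b -> a <= v <= b ->
            Rabs (u - v) < 2 * df N -> Cnorm (Cadd (g u) (Copp (g v))) < / (INR N + 1)).
  { intros N. unfold df. apply proj2_sig. }
  assert (Hddpos : forall N, ddf df N > 0) by (apply ddf_pos; intros; apply Hdfp).
  assert (Hdiv : forall N, {p : nat * (nat -> R) * (nat -> R) | tagged_division a b (fst (fst p)) (snd (fst p)) (snd p) /\ mesh_lt (fst (fst p)) (snd (fst p)) (ddf df N)}).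
  { intros N. apply constructive_indefinite_description.
    destruct (div_exists a b (ddf df N) Hab (Hddpos N)) as [n [t [s H]]]. exists (n, t, s). auto. }
  set (y := fun N => let p := proj1_sig (Hdiv N) in RS_sum X g x (fst (fst p)) (snd (fst p)) (snd p)).
  assert (Hkey : forall i N, forall n t s n' t' s', tagged_division a b n t s -> mesh_lt n t (df N) ->
            tagged_division a b n' t' s' -> mesh_lt n' t' (df N) ->
            exists B, 0 <= B /\ sn i (vsub (RS_sum X g x n t s) (RS_sum X g x n' t' s')) <= 4 * B * / (INR N + 1) /\
            forall e, Eab X x a b e -> sn i e <= B).
  { intros i N n t s n' t' s' H1 H2 H3 H4. destruct (HBd i) as [B [HB0 HB]]. exists B. split; auto. split; auto.
    apply (key x a b i B HB0 HB g (/ (INR N + 1)) (df N)); auto.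
    apply Rinv_0_lt_compat. pose proof (pos_INR N); lra. apply Hdfp. apply Hdfp. }
  assert (Hbnd : forall i, exists B, 0 <= B /\ forall N n t s n' t' s', tagged_division a b n t s -> mesh_lt n t (df N) ->
            tagged_division a b n' t' s' -> mesh_lt n' t' (df N) ->
            sn i (vsub (RS_sum X g x n t s) (RS_sum X g x n' t' s')) <= 4 * B * / (INR N + 1)).
  { intros i. destruct (HBd i) as [B [HB0 HB]]. exists B. split; auto. intros.
    apply (key x a b i B HB0 HB g (/ (INR N + 1)) (df N)); auto.
    apply Rinv_0_lt_compat. pose proof (pos_INR N); lra. apply Hdfp. apply Hdfp. }
  clear Hkey.
  assert (HyN : forall N, tagged_division a b (fst (fst (proj1_sig (Hdiv N)))) (snd (fst (proj1_sig (Hdiv N)))) (snd (proj1_sig (Hdiv N)))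
                 /\ mesh_lt (fst (fst (proj1_sig (Hdiv N)))) (snd (fst (proj1_sig (Hdiv N)))) (ddf df N)).
  { intros N. apply (proj2_sig (Hdiv N)). }
  assert (Hsmall : forall B eps, 0 <= B -> eps > 0 -> exists N, 4 * B * / (INR N + 1) < eps).
  { intros B eps HB He. destruct (INR_unbounded (4 * B / eps)) as [N HN]. exists N.
    pose proof (pos_INR N).
    apply (Rmult_lt_reg_r (INR N + 1)). lra. rewrite Rmult_assoc, Rinv_l, Rmult_1_r by lra.
    apply (Rmult_lt_reg_r (/ eps)). apply Rinv_0_lt_compat; lra.
    replace (eps * (INR N + 1) * / eps) with (INR N + 1) by (field; lra). unfold Rdiv in HN. lra. }
  assert (Hcy : cauchy_seq X y).
  { intros i eps He. destruct (Hbnd i) as [B [HB0 HB]]. destruct (Hsmall B eps HB0 He) as [N HN].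
    exists N. intros m n Hm Hn. unfold y.
    destruct (HyN m) as [Dm Mm]. destruct (HyN n) as [Dn Mn].
    eapply Rle_lt_trans; [|exact HN]. apply (HB N); auto.
    - apply (mesh_mono _ _ (ddf df m)); auto. pose proof (ddf_anti df N m Hm). pose proof (ddf_le df N). lra.
    - apply (mesh_mono _ _ (ddf df n)); auto. pose proof (ddf_anti df N n Hn). pose proof (ddf_le df N). lra. }
  destruct (Hsc y Hcy) as [I HI].
  exists I. intros i eps He.
  destruct (Hbnd i) as [B [HB0 HB]]. destruct (Hsmall B (eps/2) HB0 ltac:(lra)) as [N HN].
  destruct (HI i (eps/2) ltac:(lra)) as [M HM].
  exists (ddf df N). split. apply Hddpos.
  intros n t s Hd Hm.
  set (K := Nat.max N M).
  specialize (HM K ltac:(unfold K; lia)).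
  destruct (HyN K) as [DK MK].
  assert (sn i (vsub (RS_sum X g x n t s) (y K)) <= 4 * B * / (INR N + 1)).
  { unfold y. apply (HB N); auto.
    - apply (mesh_mono _ _ (ddf df N)); auto. apply ddf_le.
    - apply (mesh_mono _ _ (ddf df K)); auto. pose proof (ddf_anti df N K ltac:(unfold K; lia)). pose proof (ddf_le df N). lra. }
  pose proof (sn_sub_tri i (RS_sum X g x n t s) (y K) I). lra.
Qed.
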